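(* Every free monoid is sofic.
   Context: For a non-empty finite set $X$, $\mathrm{Map}(X)$ is the monoid of all maps $X\to X$ under composition (identity $\mathrm{Id}_X$) with the Hamming metric $d_X(f,g)=|\{x\in X : f(x)\ne g(x)\}|/|X|$. For a monoid $M$ with identity $1_M$, finite $K\subset M$ and $\varepsilon,\alpha>0$, a map $\varphi\colon M\to\mathrm{Map}(X)$ is a $(K,\varepsilon)$-morphism if $d_X(\varphi(k_1k_2),\varphi(k_1)\varphi(k_2))\le\varepsilon$ for all $k_1,k_2\in K$ and $d_X(\varphi(1_M),\mathrm{Id}_X)\le\varepsilon$; it is $(K,\alpha)$-injective if $d_X(\varphi(k_1),\varphi(k_2))\ge\alpha$ for all distinct $k_1,k_2\in K$. $M$ is sofic if for every finite $K\subset M$ and every $\varepsilon>0$ there exist a non-empty finite set $X$ and a $(K,1-\varepsilon)$-injective $(K,\varepsilon)$-morphism $\varphi\colon M\to\mathrm{Map}(X)$. *)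

(* Defs.v *)
From mathcomp Require Import all_boot.
From Stdlib Require Import Reals.
Set Implicit Arguments. Unset Strict Implicit. Unset Printing Implicit Defensive.

Record is_monoid (M : Type) (mul : M -> M -> M) (one : M) : Prop := {
  monoid_assoc : forall a b c, mul a (mul b c) = mul (mul a b) c;
  monoid_mul1 : forall a, mul one a = a;
  monoid_mul1r : forall a, mul a one = a }.

Definition hamming (X : finType) (f g : X -> X) : R :=
  (INR #|[pred x : X | f x != g x]| / INR #|X|)%R.

Definition mapmul (X : finType) (f g : X -> X) : X -> X := fun x => f (g x).

Definition is_K_eps_morphism (M : Type) (mul : M -> M -> M) (one : M)
  (X : finType) (K : seq M) (eps : R) (phi : M -> (X -> X)) : Prop :=
  (forall k1 k2, List.In k1 K -> List.In k2 K ->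
     (hamming (phi (mul k1 k2)) (mapmul (phi k1) (phi k2)) <= eps)%R) /\
  (hamming (phi one) (fun x => x) <= eps)%R.

Definition is_K_alpha_injective (M : Type) (X : finType) (K : seq M)
  (alpha : R) (phi : M -> (X -> X)) : Prop :=
  forall k1 k2, List.In k1 K -> List.In k2 K -> k1 <> k2 ->
    (alpha <= hamming (phi k1) (phi k2))%R.

Definition sofic (M : Type) (mul : M -> M -> M) (one : M) : Prop :=
  forall (K : seq M) (eps : R), (0 < eps)%R ->
    exists (X : finType) (phi : M -> (X -> X)),
      (0 < #|X|)%N /\
      is_K_alpha_injective K (1 - eps) phi /\
      is_K_eps_morphism mul one K eps phi.

Definition free_monoid (A : Type) := seq A.
Definition free_mul (A : Type) (u v : free_monoid A) : free_monoid A := u ++ v.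
Definition free_one (A : Type) : free_monoid A := [::].

Lemma free_monoid_is_monoid (A : Type) : is_monoid (@free_mul A) (@free_one A).
Proof. split; [exact: catA | by [] | exact: cats0]. Qed.

(* Main.v *)
Require Import Defs.
From mathcomp Require Import all_boot.
From Stdlib Require Import Reals.
From HB Require Import structures.
From mathcomp Require Import all_algebra.
From Stdlib Require Import ClassicalEpsilon Lra.
From mathcomp Require Import ring.

Set Implicit Arguments. Unset Strict Implicit. Unset Printing Implicit Defensive.

Import GRing.Theory.
Definition ceqb (A : Type) (x y : A) : bool :=
  if excluded_middle_informative (x = y) then true else false.
Lemma ceqbP (A : Type) : Equality.axiom (@ceqb A).
Proof. move=> x y; rewrite /ceqb; case: excluded_middle_informative => h.
  by constructor. by constructor. Qed.
Definition clt (A : Type) : Type := A.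
HB.instance Definition _ (A : Type) := hasDecEq.Build (clt A) (@ceqbP A).

Section S.
Variable A : Type.
Variable L : seq (clt A).
Variable B : nat.

Definition cnat (w : seq A) : nat :=
  foldr (fun a y => (y * B + index (a : clt A) L)%N) 0%N w.

Definition phi (p : nat) (w : seq A) (x : 'F_p) : 'F_p :=
  foldr (fun a y => (B%:R * y + (index (a : clt A) L)%:R)%R) x w.

Arguments phi : clear implicits.
Lemma phi_aff p w x : phi p w x = ((expn B (size w))%:R * x + (cnat w)%:R)%R.
Proof.
elim: w => [|a w IH] /=; first by rewrite expn0 mul1r addr0.
rewrite IH expnS natrD natrM natrM mulrDr mulrA addrA; congr (_ + _)%R.
by rewrite [((cnat w)%:R * _)%R]mulrC.
Qed.

Lemma phi_cat p u v x : phi p (u ++ v) x = phi p u (phi p v x).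
Proof. by rewrite /phi foldr_cat. Qed.

Hypothesis HB : (size L < B)%N.

Lemma cnat_inj (u v : seq A) : size u = size v ->
  {subset (u : seq (clt A)) <= L} -> {subset (v : seq (clt A)) <= L} ->
  cnat u = cnat v -> u = v.
Proof.
elim: u v => [|a u IH] [|b v] //= [] Hs Hu Hv Hc.
have Ba : (index (a : clt A) L < B)%N by apply: leq_ltn_trans (index_size _ _) HB.
have Bb : (index (b : clt A) L < B)%N by apply: leq_ltn_trans (index_size _ _) HB.
have B0 : (0 < B)%N by apply: leq_ltn_trans HB.
have Hm := congr1 (fun n => n %% B)%N Hc.
have Hd := congr1 (fun n => n %/ B)%N Hc.
rewrite /= !modnMDl !modn_small // in Hm.
rewrite /= !divnMDl // !divn_small // !addn0 in Hd.
have ha : (a : clt A) \in L by apply: Hu; rewrite inE eqxx.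
have hb : (b : clt A) \in L by apply: Hv; rewrite inE eqxx.
have eab : a = b.
  by rewrite -(nth_index (a : clt A) ha) Hm (nth_index (a : clt A) hb).
rewrite eab (IH v Hs) // => x hx.
  by apply: Hu; rewrite inE hx orbT.
by apply: Hv; rewrite inE hx orbT.
Qed.
End S.

Lemma aff2 (F : fieldType) (a1 a2 c1 c2 x y : F) :
  (a1 * x + c1 = a2 * x + c2 -> a1 * y + c1 = a2 * y + c2 -> x != y ->
  a1 = a2 /\ c1 = c2)%R.
Proof.
move=> h1 h2 hxy.
have : ((a1 - a2) * (x - y) = 0)%R.
  have -> : ((a1 - a2) * (x - y) = (a1 * x + c1) - (a2 * x + c2) - ((a1 * y + c1) - (a2 * y + c2)))%R by ring.
  by rewrite h1 h2 !subrr.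
move/eqP; rewrite mulf_eq0 subr_eq0 subr_eq0 (negbTE hxy) orbF => /eqP e.
by split=> //; move: h1; rewrite e => /addrI.
Qed.

Section RB.
Local Open Scope R_scope.
Lemma real_bound (c p N : nat) (eps : R) : (0 < N)%coq_nat -> ltn N p ->
  leq p c.+1 -> Rinv (INR N) < eps -> 1 - eps <= INR c / INR p.
Proof.
move=> N0 /ltP Np /leP pc hN.
have hN0 : 0 < INR N by apply: lt_0_INR.
have hNp : INR N < INR p by apply: lt_INR.
have hp0 : 0 < INR p by lra.
have hc : INR p <= INR c + 1.
  by rewrite -(INR_1) -plus_INR; apply: le_INR; rewrite Nat.add_1_r.
have hinv : Rinv (INR p) < Rinv (INR N) by apply: Rinv_lt_contravar; nra.
have e : INR c / INR p = INR c * Rinv (INR p) by [].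
have hpp : INR p * Rinv (INR p) = 1 by apply: Rinv_r; lra.
have hi0 : 0 < Rinv (INR p) by apply: Rinv_0_lt_compat.
rewrite e. nra.
Qed.

Lemma hamming_eq (X : finType) (f g : X -> X) : (forall x, f x = g x) ->
  hamming f g = 0.
Proof.
move=> h; rewrite /hamming.
have -> : #|[pred x : X | f x != g x]| = O.
  by apply: eq_card0 => x; rewrite !inE h eqxx.
by rewrite /= /Rdiv Rmult_0_l.
Qed.
End RB.

Lemma in_flatten (A : Type) (K : seq (seq A)) k :
  List.In k K -> {subset (k : seq (clt A)) <= (flatten K : seq (clt A))}.
Proof.
elim: K => [|k' K IH] //= [<-|hk] x hx; rewrite mem_cat ?hx //.
by rewrite (IH hk x hx) orbT.
Qed.

Lemma bnd_in (A : Type) (f : seq A -> nat) (N : nat) (K : seq (seq A)) :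
  (N <= foldr (fun k s => f k + s) N K)%N /\
  forall k, List.In k K -> (f k <= foldr (fun k s => f k + s) N K)%N.
Proof.
elim: K => [|k K [IH1 IH2]] /=; first by split.
split; first by apply: leq_trans IH1 (leq_addl _ _).
move=> k' [<-|h]; first by apply: leq_addr.
by apply: leq_trans (IH2 _ h) (leq_addl _ _).
Qed.

Theorem corollary4p4 (A : Type) : sofic (@free_mul A) (@free_one A).
Proof.
move=> K eps Heps.
pose L : seq (clt A) := flatten K.
pose B := (size L).+2.
have HB : (size L < B)%N by rewrite /B ltnS leqnSn.
have B1 : (1 < B)%N by [].
have [N [HN N0]] := archimed_cor1 eps Heps.
pose f := fun k : seq A => (expn B (size k) + cnat L B k)%N.
have [bN bK] := bnd_in f N K.
set bnd := foldr _ _ _ in bN bK.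
have [p Hp pr] := prime_above bnd.
exists ('F_p : finType), (@phi _ L B p).
split; first by rewrite card_Fp // prime_gt0.
split.
- move=> k1 k2 h1 h2 hne.
  have c1 : (#|[pred x : 'F_p | @phi _ L B p k1 x == @phi _ L B p k2 x]| <= 1)%N.
    rewrite leqNgt; apply/negP => /card_gt1P [x [y [hx hy hxy]]].
    rewrite !inE !phi_aff in hx hy.
    have [ea ec] := aff2 (eqP hx) (eqP hy) hxy.
    have b1 := leq_ltn_trans (bK k1 h1) Hp.
    have b2 := leq_ltn_trans (bK k2 h2) Hp.
    rewrite /f in b1 b2.
    have ea' : ((expn B (size k1))%:R : 'F_p)%R = ((expn B (size k2))%:R)%R := ea.
    have v1 := val_Fp_nat pr (expn B (size k1)).
    have v2 := val_Fp_nat pr (expn B (size k2)).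
    rewrite ea' v2 in v1; move: v1; rewrite !modn_small;
      try by [apply: leq_ltn_trans (leq_addr _ _) b1 | apply: leq_ltn_trans (leq_addr _ _) b2].
    move/eqP; rewrite eqn_exp2l // => /eqP es.
    have ec' : ((cnat L B k1)%:R : 'F_p)%R = ((cnat L B k2)%:R)%R := ec.
    have w1 := val_Fp_nat pr (cnat L B k1).
    have w2 := val_Fp_nat pr (cnat L B k2).
    rewrite ec' w2 in w1; move: w1; rewrite !modn_small;
      try by [apply: leq_ltn_trans (leq_addl _ _) b1 | apply: leq_ltn_trans (leq_addl _ _) b2].
    move=> ecn; apply: hne.
    by symmetry; apply: (cnat_inj HB es (in_flatten h2) (in_flatten h1) ecn).
  have cc := cardC [pred x : 'F_p | @phi _ L B p k1 x == @phi _ L B p k2 x].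
  rewrite card_Fp // in cc.
  have ed : #|[pred x : 'F_p | @phi _ L B p k1 x != @phi _ L B p k2 x]| =
            #|[predC [pred x : 'F_p | @phi _ L B p k1 x == @phi _ L B p k2 x]]|.
    by apply: eq_card => x; rewrite !inE.
  rewrite /hamming ed card_Fp //.
  eapply real_bound; [exact N0| | |exact HN].
  + by apply: leq_ltn_trans bN Hp.
  + apply: leq_trans (eq_leq (esym cc)) _; exact: (leq_add c1 (leqnn _)).
- split.
  + move=> k1 k2 _ _; rewrite hamming_eq; first exact: Rlt_le.
    by move=> x; rewrite /free_mul /mapmul phi_cat.
  + by rewrite hamming_eq; [exact: Rlt_le | ].
Qed.
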